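(* Suppose $L$ is in the block upper-triangular form $L=[L^{k,q}]_{k,q=1}^K$ with $L^{k,q}=0$ for $k>q$, where each diagonal block $L^{k,k}$ ($n_k\times n_k$) is irreducible or of dimension one, and for each $k<K$ there is $q>k$ with $L^{k,q}\ne0$. For $k<K$, let $\tilde L^{k,k}$, $D^k$, $\xi^k$, $\Xi^k$, $R^k$ be as defined in the context. Then $Q^k:=\frac12\big[\Xi^kL^{k,k}+(\Xi^kL^{k,k})^\top\big]=R^k+\Xi^kD^k$ is positive definite and $$\Xi^k\le\frac{\rho(\Xi^k)}{\lambda_{\min}(Q^k)}\,Q^k\quad\text{for all }k<K,$$ where $\lambda_{\min}(Q^k)$ is the smallest eigenvalue of $Q^k$ and $M\le N$ means $N-M$ is positive semidefinite.
   Context: $L=D-\mathcal A$ is the Laplacian of a weighted directed graph with nonnegative weights $a_{ij}$ ($a_{ii}=0$), so off-diagonal entries are $\le0$ and row sums of $L$ are zero. Define $\tilde L^{k,k}$ by $\tilde L^{k,k}_{ij}=L^{k,k}_{ij}$ for $i\ne j$ and $\tilde L^{k,k}_{ii}=-\sum_{p\ne i}L^{k,k}_{ip}$; let $D^k=L^{k,k}-\tilde L^{k,k}=\mathrm{diag}(D^k_1,\dots,D^k_{n_k})$ (a nonnegative diagonal matrix). Let $(\xi^k)^\top$ be the positive left eigenvector of $\tilde L^{k,k}$ for eigenvalue $0$ with components summing to $1$ (for $n_k=1$, $\xi^k=1$), $\Xi^k=\mathrm{diag}(\xi^k)$, and $R^k=\frac12[\Xi^k\tilde L^{k,k}+(\Xi^k\tilde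 L^{k,k})^\top]$. $\rho$ denotes spectral radius. *)

(* Defs.v *)
(* Scalars: a numClosedFieldType C (e.g. algC); the real
   numbers of the paper are the elements of C satisfying [x \is Num.real]. *)
From HB Require Import structures.
From mathcomp Require Import all_boot all_order all_algebra.
Set Implicit Arguments. Unset Strict Implicit. Unset Printing Implicit Defensive.
Import Order.TTheory GRing.Theory Num.Theory.
Local Open Scope ring_scope.

Section Defs.
Variable C : numClosedFieldType.

Definition ctr {m n : nat} (M : 'M[C]_(m, n)) : 'M[C]_(n, m) :=
  (map_mx (fun z : C => z^*) M)^T.

Definition laplacian {n : nat} (a : 'M[C]_n) : 'M[C]_n :=
  \matrix_(i, j) ((i == j)%:R * (\sum_(p < n) a i p) - a i j).

Definition weight_matrix {n : nat} (a : 'M[C]_n) : Prop :=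
  (forall i j, 0 <= a i j) /\ (forall i, a i i = 0).

(* irreducible matrix: there is no nonempty proper index set S with
   M i j = 0 for all i in S, j notin S (i.e. M is not permutation-similar
   to a block triangular matrix with nontrivial square diagonal blocks). *)
Definition irreducible_mx {n : nat} (M : 'M[C]_n) : Prop :=
  forall S : {set 'I_n}, S != set0 -> S != setT ->
    exists i j, [/\ i \in S, j \notin S & M i j != 0].

Definition tildeL {n : nat} (M : 'M[C]_n) : 'M[C]_n :=
  \matrix_(i, j) (if i == j then - \sum_(p < n | p != i) M i p else M i j).

Definition symmetrize {n : nat} (M : 'M[C]_n) : 'M[C]_n :=
  2%:R^-1 *: (M + M^T).

Definition hermitian_mx {n : nat} (M : 'M[C]_n) : Prop := ctr M = M.

Definition posdef {n : nat} (M : 'M[C]_n) : Prop :=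
  hermitian_mx M /\
  forall x : 'cV[C]_n, x != 0 -> 0 < (ctr x *m M *m x) 0 0.

Definition psd {n : nat} (M : 'M[C]_n) : Prop :=
  hermitian_mx M /\
  forall x : 'cV[C]_n, 0 <= (ctr x *m M *m x) 0 0.

Definition is_spectral_radius {n : nat} (M : 'M[C]_n) (r : C) : Prop :=
  (exists l, eigenvalue M l /\ r = `|l|) /\
  (forall l, eigenvalue M l -> `|l| <= r).

Definition is_min_eigenvalue {n : nat} (M : 'M[C]_n) (m : C) : Prop :=
  eigenvalue M m /\ (forall l, eigenvalue M l -> m <= l).

End Defs.

(* Main.v *)
Require Import Defs.
From HB Require Import structures.
From mathcomp Require Import all_boot all_order all_algebra.
From mathcomp Require Import ring.
Import Order.TTheory GRing.Theory Num.Theory.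
Local Open Scope ring_scope.

Section Aux.
Variable C : numClosedFieldType.

Lemma quadE n (x : 'cV[C]_n) (Q : 'M[C]_n) :
  (ctr x *m Q *m x) 0 0 = \sum_i \sum_j (x i 0)^* * Q i j * x j 0.
Proof.
rewrite mxE exchange_big /=; apply: eq_bigr => i _.
rewrite mxE mulr_suml; apply: eq_bigr => j _.
by rewrite /ctr !mxE.
Qed.

Lemma key_id n (xi : 'rV[C]_n) (M : 'M[C]_n) (y : 'I_n -> C) (d : 'I_n -> C)
  (Hrow : forall i, \sum_j M i j = d i)
  (Hcol : forall j, \sum_i xi 0 i * M i j = xi 0 j * d j) :
  \sum_i \sum_j (y i)^* * (2%:R^-1 * (xi 0 i * M i j + xi 0 j * M j i)) * y j
  = 2%:R^-1 * (\sum_i \sum_j (- (xi 0 i * M i j)) * ((y i - y j) * (y i - y j)^*))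
    + \sum_i xi 0 i * d i * (y i * (y i)^*).
Proof.
set c := fun i j => xi 0 i * M i j.
pose T1 := \sum_i \sum_j (- c i j) * (y i * (y i)^*).
pose T4 := \sum_i \sum_j (- c i j) * (y j * (y j)^*).
pose T2 := \sum_i \sum_j c i j * (y j * (y i)^*).
pose T3 := \sum_i \sum_j c i j * (y i * (y j)^*).
pose D := \sum_i xi 0 i * d i * (y i * (y i)^*).
have ES : \sum_i \sum_j (- c i j) * ((y i - y j) * (y i - y j)^*) = T1 + T4 + T2 + T3.
  rewrite /T1 /T2 /T3 /T4 -!big_split /=; apply: eq_bigr => i _.
  rewrite -!big_split /=; apply: eq_bigr => j _.
  rewrite rmorphB /=; ring.
have E1 : T1 = - D.
  rewrite /T1 /D -sumrN; apply: eq_bigr => i _.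
  rewrite -Hrow mulr_sumr mulr_suml -sumrN; apply: eq_bigr => j _.
  rewrite /c; ring.
have E4 : T4 = - D.
  rewrite /T4 /D exchange_big -sumrN; apply: eq_bigr => j _ /=.
  rewrite -Hcol mulr_suml -sumrN; apply: eq_bigr => i _.
  rewrite /c; ring.
have E3 : T3 = \sum_i \sum_j c j i * (y j * (y i)^*).
  by rewrite /T3 exchange_big.
have EL : \sum_i \sum_j (y i)^* * (2%:R^-1 * (xi 0 i * M i j + xi 0 j * M j i)) * y j
   = 2%:R^-1 * (T2 + T3).
  rewrite E3 /T2 -big_split mulr_sumr; apply: eq_bigr => i _.
  rewrite -big_split mulr_sumr; apply: eq_bigr => j _.
  rewrite /c /=; ring.
rewrite EL ES E1 E4 -/D.
have h2 : (2%:R : C) != 0 by rewrite pnatr_eq0.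
field.
by [].
Qed.


Lemma symE n (xi : 'rV[C]_n) (M : 'M[C]_n) i j :
  symmetrize (diag_mx xi *m M) i j = 2%:R^-1 * (xi 0 i * M i j + xi 0 j * M j i).
Proof. by rewrite /symmetrize mul_diag_mx !mxE. Qed.

Lemma core_posdef n (M : 'M[C]_n) (xi : 'rV[C]_n)
  (Hreal : forall i j, M i j \is Num.real)
  (Hoff : forall i j, i != j -> M i j <= 0)
  (Hd : forall i, 0 <= \sum_j M i j)
  (Hdp : exists i, 0 < \sum_j M i j)
  (Hirr : n = 1%N \/ irreducible_mx M)
  (Hxi : forall i, 0 < xi 0 i)
  (Hker : xi *m tildeL M = 0) :
  posdef (symmetrize (diag_mx xi *m M)).
Proof.
pose d := fun i => \sum_j M i j.
have Hxr : forall i, xi 0 i \is Num.real by move=> i; exact: gtr0_real.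
have Hcol : forall j, \sum_i xi 0 i * M i j = xi 0 j * d j.
  move=> j; have := congr1 (fun A : 'M[C]_(1, n) => A 0 j) Hker; rewrite !mxE => H0.
  rewrite -[LHS]subr0 -{2}H0 -sumrB (bigD1 j) //= big1 ?addr0; last first.
    by move=> i /negbTE ni; rewrite /tildeL mxE ni subrr.
  rewrite /tildeL mxE eqxx /d [in RHS](bigD1 j) //=; ring.
split.
  apply/matrixP => i j; rewrite /ctr mxE [in RHS]symE mxE symE.
  have r : 2%:R^-1 * (xi 0 j * M j i + xi 0 i * M i j) \is Num.real.
    by rewrite rpredM ?rpredV ?rpred_nat ?rpredD ?rpredM.
  by rewrite (CrealP r) [X in _ * X]addrC.
move=> x x0; rewrite quadE.
under eq_bigr => i _ do under eq_bigr => j _ do rewrite symE.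
rewrite (@key_id _ _ _ (fun i => x i 0) d) //.
set A := \sum_i _; set B := \sum_i _.
have Ha : forall i j, 0 <= - (xi 0 i * M i j) *
    ((x i 0 - x j 0) * (x i 0 - x j 0)^*).
  move=> i j; have [<-|nij] := eqVneq i j; first by rewrite subrr mul0r mulr0.
  apply: mulr_ge0; last exact: mul_conjC_ge0.
  by rewrite oppr_ge0; apply: mulr_ge0_le0; [exact: ltW | exact: Hoff].
have Hb : forall i, 0 <= xi 0 i * d i * (x i 0 * (x i 0)^*).
  by move=> i; apply: mulr_ge0; [apply: mulr_ge0; [exact: ltW|exact: Hd] | exact: mul_conjC_ge0].
have A0 : 0 <= A by apply: sumr_ge0 => i _; apply: sumr_ge0 => j _.
have B0 : 0 <= B by apply: sumr_ge0 => i _.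
have A20 : 0 <= 2%:R^-1 * A by rewrite mulr_ge0 // invr_ge0 ler0n.
rewrite lt_def addr_ge0 // andbT; apply/negP => /eqP H.
move: H => /eqP; rewrite paddr_eq0 // mulf_eq0 invr_eq0 pnatr_eq0 /= => /andP[/eqP HA /eqP HB].
have Aij : forall i j, - (xi 0 i * M i j) * ((x i 0 - x j 0) * (x i 0 - x j 0)^*) = 0.
  move=> i j.
  have Ai : \sum_j - (xi 0 i * M i j) * ((x i 0 - x j 0) * (x i 0 - x j 0)^*) = 0.
    by apply: (psumr_eq0P _ HA) => // i' _; apply: sumr_ge0.
  exact: (psumr_eq0P _ Ai).
have Bi : forall i, xi 0 i * d i * (x i 0 * (x i 0)^*) = 0.
  by move=> i; apply: (psumr_eq0P _ HB).
have Hprop : forall i j, M i j != 0 -> x i 0 = x j 0.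
  move=> i j Mij; apply/eqP; rewrite -subr_eq0 -mul_conjC_eq0.
  have /eqP := Aij i j; rewrite mulf_eq0 oppr_eq0 mulf_eq0 (gt_eqF (Hxi i)) /=.
  by rewrite (negbTE Mij).
have [i0 Hi0] := Hdp.
have y0 : x i0 0 = 0.
  apply/eqP; rewrite -mul_conjC_eq0.
  have /eqP := Bi i0; rewrite mulf_eq0 mulf_eq0 (gt_eqF (Hxi i0)) (gt_eqF Hi0) /=.
  by [].
have Hall : forall i, x i 0 = 0.
  case: Hirr => [n1|Hirr].
    move=> i; suff -> : i = i0 by [].
    have h1 : (val i < 1)%N by rewrite -n1 ltn_ord.
    have h2 : (val i0 < 1)%N by rewrite -n1 ltn_ord.
    apply: val_inj; move: h1 h2; rewrite !ltnS !leqn0 => /eqP-> /eqP->.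
    by [].
  pose S := [set i | x i 0 == 0].
  suff HS : S = setT.
    move=> i; have : i \in S by rewrite HS in_setT.
    by rewrite inE => /eqP.
  apply/eqP; apply/negPn/negP => HS.
  have S0 : S != set0 by apply/set0Pn; exists i0; rewrite inE y0.
  have [i [j [iS jS Mij]]] := Hirr S S0 HS.
  move: jS; rewrite inE -(Hprop _ _ Mij); move: iS; rewrite inE => ->.
  by [].
move/negP: x0; apply; apply/eqP/matrixP => i j; rewrite (ord1 j) mxE; exact: Hall.
Qed.


Lemma ctrM m n p (A : 'M[C]_(m, n)) (B : 'M[C]_(n, p)) :
  ctr (A *m B) = ctr B *m ctr A.
Proof.
apply/matrixP => i j; rewrite /ctr !mxE rmorph_sum; apply: eq_bigr => k _.
by rewrite !mxE rmorphM mulrC.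
Qed.

Lemma ctrK m n (A : 'M[C]_(m, n)) : ctr (ctr A) = A.
Proof. by apply/matrixP => i j; rewrite /ctr !mxE conjCK. Qed.

Lemma diag_eig n (d : 'rV[C]_n) i : eigenvalue (diag_mx d) (d 0 i).
Proof.
apply/eigenvalueP; exists (delta_mx 0 i).
  apply/matrixP => a b; rewrite mul_mx_diag !mxE.
  by have [->|/negbTE nb] := eqVneq b i; rewrite ?nb ?andbF ?mul0r ?mulr0 // mulrC.
apply/negP => /eqP /matrixP /(_ 0 i); rewrite !mxE !eqxx /= => /eqP.
by rewrite oner_eq0.
Qed.

Lemma sq_ge0 (z : C) : 0 <= z^* * z.
Proof. by rewrite mulrC mul_conjC_ge0. Qed.

Lemma core_psd n (Q : 'M[C]_n) (xi : 'rV[C]_n) rho lmin :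
  posdef Q -> (forall i, 0 < xi 0 i) ->
  is_spectral_radius (diag_mx xi) rho -> is_min_eigenvalue Q lmin ->
  psd ((rho / lmin) *: Q - diag_mx xi).
Proof.
move=> [hQ Qpos] Hxi [[l0 [_ ->]] Hrho] [Hlmin Hmin].
set r := `|l0|.
have r0 : 0 <= r by exact: normr_ge0.
have xir : forall i, xi 0 i <= r.
  move=> i; have := Hrho _ (diag_eig _ xi i).
  by rewrite ger0_norm // ltW.
have Hnorm : Q \is normalmx.
  apply/normalmxP; rewrite -map_trmx; change (Q *m ctr Q = ctr Q *m Q).
  by rewrite hQ.
move/orthomx_spectralP: Hnorm => /=.
set P := spectralmx Q; set dv := spectral_diag Q => HQ.
have PP : P *m ctr P = 1%:M.
  have := spectral_unitarymx Q; move/unitarymxP; rewrite -map_trmx.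
  by move=> h; exact h.
have PP' : ctr P *m P = 1%:M by apply: mulmx1C.
have iP : invmx P = ctr P.
  have Pu : P \in unitmx by case: (mulmx1_unit PP).
  by rewrite -[LHS]mulmx1 -PP mulmxA mulVmx // mul1mx.
rewrite iP in HQ.
have dvl : forall i, lmin <= dv 0 i.
  move=> i; apply: Hmin; apply/eigenvalueP; exists (delta_mx 0 i *m P).
    rewrite {1}HQ !mulmxA -[delta_mx 0 i *m P *m ctr P]mulmxA PP mulmx1.
    rewrite scalemxAl; congr (_ *m _).
    apply/matrixP => a b; rewrite mul_mx_diag !mxE.
    by have [->|/negbTE nb] := eqVneq b i; rewrite ?nb ?andbF ?mul0r ?mulr0 // mulrC.
  apply/negP => /eqP h.
  have : (delta_mx 0 i : 'rV[C]_n) *m P *m ctr P = 0 by rewrite h mul0mx.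
  rewrite -mulmxA PP mulmx1 => /matrixP /(_ 0 i); rewrite !mxE !eqxx /= => /eqP.
  by rewrite oner_eq0.
have l0p : 0 < lmin.
  move/eigenvalueP: Hlmin => [v vQ v0].
  have cv0 : ctr v != 0.
    by apply: contra v0 => /eqP h; rewrite -[v]ctrK h; apply/eqP/matrixP => i j; rewrite /ctr !mxE conjC0.
  have := Qpos _ cv0; rewrite ctrK vQ -scalemxAl mxE => hp.
  set s := (v *m ctr v) 0 0 in hp.
  have s0 : 0 <= s.
    rewrite /s mxE; apply: sumr_ge0 => i _; rewrite /ctr !mxE; exact: mul_conjC_ge0.
  have sn0 : s != 0 by apply: contraTneq hp => ->; rewrite mulr0 ltxx.
  have sp : 0 < s by rewrite lt_def sn0 s0.
  by rewrite -(mulfK sn0 lmin) divr_gt0.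
have ln0 : lmin != 0 by rewrite gt_eqF.
have lr : lmin \is Num.real by exact: gtr0_real.
have ar : r / lmin \is Num.real.
  by rewrite rpredM ?rpredV // ger0_real.
split.
  apply/matrixP => i j; rewrite /ctr !mxE rmorphB rmorphM /= (CrealP ar).
  have := congr1 (fun A : 'M[C]_n => A i j) hQ; rewrite /ctr !mxE => ->.
  rewrite rmorphMn /= (CrealP (gtr0_real (Hxi j))).
  by have [->|nij] := eqVneq i j; rewrite ?eqxx // (negbTE nij) eq_sym (negbTE nij) !mulr0n.
move=> x.
have Edef : (ctr x *m (r / lmin *: Q - diag_mx xi) *m x) 0 0
   = r / lmin * (ctr x *m Q *m x) 0 0 - (ctr x *m diag_mx xi *m x) 0 0.
  rewrite !quadE mulr_sumr -sumrB; apply: eq_bigr => i _.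
  rewrite mulr_sumr -sumrB; apply: eq_bigr => j _; rewrite !mxE; ring.
rewrite Edef.
set y := P *m x.
have EF : (ctr x *m Q *m x) 0 0 = \sum_i (y i 0)^* * dv 0 i * y i 0.
  rewrite HQ !mulmxA -ctrM -/y -mulmxA [ctr y *m _ *m _]mulmxA -[ctr y *m _ *m P *m x]mulmxA -/y.
  rewrite mul_mx_diag mxE; apply: eq_bigr => i _; by rewrite !mxE.
have EG : \sum_i (x i 0)^* * x i 0 = \sum_i (y i 0)^* * y i 0.
  have : (ctr x *m x) 0 0 = (ctr y *m y) 0 0.
    by rewrite /y ctrM mulmxA -[ctr x *m ctr P *m P]mulmxA PP' mulmx1.
  rewrite !mxE => h.
  rewrite [LHS](eq_bigr (fun i => ctr x 0 i * x i 0)); last by move=> i _; rewrite /ctr !mxE.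
  rewrite h; apply: eq_bigr => i _; by rewrite /ctr !mxE.
have EH : (ctr x *m diag_mx xi *m x) 0 0 = \sum_i (x i 0)^* * xi 0 i * x i 0.
  rewrite mul_mx_diag mxE; apply: eq_bigr => i _; by rewrite !mxE.
rewrite EF EH.
set F := \sum_i _ ; set H := \sum_i _.
set G := \sum_i (x i 0)^* * x i 0.
have h1 : 0 <= F - lmin * G.
  rewrite /G EG mulr_sumr -sumrB; apply: sumr_ge0 => i _.
  rewrite (_ : _ - _ = (dv 0 i - lmin) * ((y i 0)^* * y i 0)); last by ring.
  by rewrite mulr_ge0 ?sq_ge0 // subr_ge0.
have h2 : 0 <= r * G - H.
  rewrite /G mulr_sumr -sumrB; apply: sumr_ge0 => i _.
  rewrite (_ : _ - _ = (r - xi 0 i) * ((x i 0)^* * x i 0)); last by ring.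
  by rewrite mulr_ge0 ?sq_ge0 // subr_ge0.
rewrite (_ : r / lmin * F - H = r / lmin * (F - lmin * G) + (r * G - H)); last first.
  by field.
by rewrite addr_ge0 // mulr_ge0 // divr_ge0 // ltW.
Qed.

Lemma Qsplit n (xi : 'rV[C]_n) (M : 'M[C]_n) :
  symmetrize (diag_mx xi *m M) =
  symmetrize (diag_mx xi *m tildeL M) + diag_mx xi *m (M - tildeL M).
Proof.
rewrite [X in _ = _ + X]mul_diag_mx; apply/matrixP => i j; rewrite symE mxE symE mxE /tildeL ?mxE.
have h2 : (2%:R : C) != 0 by rewrite pnatr_eq0.
have [<-|nij] := eqVneq i j.
  by field.
by ring.
Qed.

End Aux.

Theorem mainTheorem7 (C : numClosedFieldType) (K : nat) (nb : 'I_K -> nat)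
    (a : 'M[C]_(\sum_(k < K) nb k))
    (Ha : weight_matrix a)
    (Hnb : forall k, (0 < nb k)%N)
    (Hup : forall k q : 'I_K, (q < k)%N -> submxblock (laplacian a) k q = 0)
    (Hirr : forall k : 'I_K,
        nb k = 1%N \/ irreducible_mx (submxblock (laplacian a) k k))
    (Hconn : forall k : 'I_K, (k.+1 < K)%N ->
        exists q : 'I_K, (k < q)%N /\ submxblock (laplacian a) k q != 0) :
  forall (k : 'I_K), (k.+1 < K)%N ->
  let Lkk := submxblock (laplacian a) k k in
  let Lt := tildeL Lkk in
  let Dk := Lkk - Lt in
  forall xi : 'rV[C]_(nb k),
    (forall i, 0 < xi 0 i) -> xi *m Lt = 0 -> \sum_i xi 0 i = 1 ->
  let Xi := diag_mx xi in
  let Rk := symmetrize (Xi *m Lt) in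
  let Qk := symmetrize (Xi *m Lkk) in
  [/\ Qk = Rk + Xi *m Dk,
      posdef Qk &
      forall rho lmin, is_spectral_radius Xi rho -> is_min_eigenvalue Qk lmin ->
        psd ((rho / lmin) *: Qk - Xi)].
Proof.
move=> k hk Lkk Lt Dk xi Hxi Hker _ Xi Rk Qk.
have [Ha0 Hdiag] := Ha.
have RankE : forall (q q' : 'I_K) (i : 'I_(nb q)) (j : 'I_(nb q')),
    (@tagnat.Rank _ nb q i == @tagnat.Rank _ nb q' j) = (q == q') && (val i == val j).
  by move=> q q' i j; rewrite -tagnat.eq_Rank.
have LE : forall (q q' : 'I_K) (i : 'I_(nb q)) (j : 'I_(nb q')),
    submxblock (laplacian a) q q' i j =
    ((q == q') && (val i == val j))%:R * (\sum_p a (@tagnat.Rank _ nb q i) p)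
      - a (@tagnat.Rank _ nb q i) (@tagnat.Rank _ nb q' j).
  by move=> q q' i j; rewrite /submxblock /laplacian !mxE RankE.
have LkkE : forall i j, Lkk i j = (i == j)%:R * (\sum_p a (@tagnat.Rank _ nb k i) p)
      - a (@tagnat.Rank _ nb k i) (@tagnat.Rank _ nb k j).
  by move=> i j; rewrite /Lkk LE eqxx.
pose S := [set @tagnat.Rank _ nb k j | j : 'I_(nb k)].
have Sinj : {in predT &, injective (@tagnat.Rank _ nb k)}.
  move=> i j _ _ /eqP; rewrite RankE eqxx /= => /eqP; exact: val_inj.
have rowsum : forall i, \sum_j Lkk i j = \sum_(p | p \notin S) a (@tagnat.Rank _ nb k i) p.
  move=> i; rewrite (eq_bigr _ (fun j _ => LkkE i j)) sumrB.
  set T := \sum_p a _ p.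
  have -> : \sum_j (i == j)%:R * T = T.
    rewrite (bigD1 i) //= eqxx mul1r big1 ?addr0 // => j nj.
    by rewrite eq_sym (negbTE nj) mul0r.
  rewrite /T (bigID (fun p => p \in S)) /= big_imset //=.
  rewrite addrC addrK. by [].
have Hreal : forall i j, Lkk i j \is Num.real.
  move=> i j; rewrite LkkE rpredB ?rpredM ?rpred_nat ?rpred_sum //.
    by move=> p _; apply: ger0_real.
  exact: ger0_real.
have Hoff : forall i j, i != j -> Lkk i j <= 0.
  by move=> i j nij; rewrite LkkE (negbTE nij) mul0r sub0r oppr_le0.
have Hd : forall i, 0 <= \sum_j Lkk i j.
  by move=> i; rewrite rowsum; apply: sumr_ge0 => p _.
have Hdp : exists i, 0 < \sum_j Lkk i j.
  have [q [kq /matrix0Pn [i [j Hij]]]] := Hconn k hk.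
  exists i; rewrite rowsum.
  have nkq : (k == q) = false by apply/negbTE; rewrite neq_ltn kq.
  move: Hij; rewrite LE nkq /= mul0r sub0r oppr_eq0 => Hij.
  have apos : 0 < a (@tagnat.Rank _ nb k i) (@tagnat.Rank _ nb q j).
    by rewrite lt_def Hij Ha0.
  have nS : @tagnat.Rank _ nb q j \notin S.
    apply/imsetP => [[j' _ /eqP]]; by rewrite RankE eq_sym nkq.
  rewrite (bigD1 (@tagnat.Rank _ nb q j)) //=.
  by apply: ltr_pwDl => //; apply: sumr_ge0 => p _.
have HQ : posdef Qk.
  by apply: core_posdef => //; exact: Hirr.
split => //.
  exact: Qsplit.
by move=> rho lmin Hr Hl; apply: core_psd.
Qed.
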